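(* Let $X$ be a Lindelöf $P$-space. Then $C_p(X)$ has a bounded resolution if and only if $X$ is countable and discrete.
   Context: A $P$-space is a Tychonoff space in which every countable intersection of open sets is open. $C_p(X)$ is the space of continuous real-valued functions on $X$ with the pointwise topology. Order $\mathbb{N}^{\mathbb{N}}$ pointwise. A bounded resolution of a locally convex space $F$ is a family $\{B_\alpha:\alpha\in\mathbb{N}^{\mathbb{N}}\}$ of bounded subsets covering $F$ with $B_\alpha\subseteq B_\beta$ whenever $\alpha\le\beta$. *)

(* Defs.v *)
From HB Require Import structures.
From mathcomp Require Import all_boot all_order all_algebra.
From mathcomp Require Import all_classical all_reals all_analysis.

Import Order.TTheory GRing.Theory Num.Theory numFieldNormedType.Exports.
Local Open Scope classical_set_scope.
Local Open Scope ring_scope.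

Definition tychonoff_space (R : realType) (X : topologicalType) : Prop :=
  accessible_space X /\ completely_regular_space X.

Definition P_space (R : realType) (X : topologicalType) : Prop :=
  tychonoff_space R X /\
  forall F : nat -> set X, (forall n, open (F n)) -> open (\bigcap_n F n).

Definition lindelof_space (X : topologicalType) : Prop :=
  forall (I : Type) (F : I -> set X), (forall i, open (F i)) ->
    [set: X] `<=` \bigcup_i F i ->
    exists J : set I, countable J /\ [set: X] `<=` \bigcup_(i in J) F i.

Definition discrete_topology_on (X : topologicalType) : Prop :=
  forall A : set X, open A.

(** The underlying set of C_p(X): continuous real-valued functions on X;
    its topology is the subspace topology of the pointwise (product)
    topology {ptws X -> R}. *)
Definition Cp (R : realType) (X : topologicalType) : set (X -> R) :=
  [set f : X -> R | continuous f].

Definition scale_set (R : realType) (X : Type) (t : R) (U : set (X -> R))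
  : set (X -> R) := [set (fun x => t * u x) | u in U].

(** Neighbourhoods of 0 in C_p(X) are the traces on C_p(X) of
    neighbourhoods of 0 in {ptws X -> R}. *)
Definition Cp_bounded (R : realType) (X : topologicalType) (B : set (X -> R))
  : Prop :=
  B `<=` Cp R X /\
  forall U : set {ptws X -> R}, nbhs (0 : {ptws X -> R}) U ->
    exists r : R, 0 < r /\
      forall t : R, r < `|t| -> B `<=` scale_set R X t (U `&` Cp R X).

Definition le_NN (a b : nat -> nat) : Prop := forall n, (a n <= b n)%N.

Definition has_bounded_resolution (R : realType) (X : topologicalType) : Prop :=
  exists B : (nat -> nat) -> set (X -> R),
    (forall a, Cp_bounded R X (B a)) /\
    Cp R X `<=` \bigcup_a B a /\
    (forall a b, le_NN a b -> B a `<=` B b).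

(* Main.v *)
Require Import Defs.
From HB Require Import structures.
From mathcomp Require Import all_boot all_order all_algebra.
From mathcomp Require Import all_classical all_reals all_analysis.
From mathcomp Require Import lra.
Import Order.TTheory GRing.Theory Num.Theory numFieldNormedType.Exports.
Local Open Scope classical_set_scope.
Local Open Scope ring_scope.


Lemma lc_cont (X Y : topologicalType) (f : X -> Y) :
  (forall x, exists U, [/\ open U, U x & forall z, U z -> f z = f x]) ->
  continuous f.
Proof.
move=> H x; have [U [oU Ux HU]] := H x.
apply: (near_cst_continuous (f x)).
by apply: (filterS HU); apply: open_nbhs_nbhs.
Qed.

Lemma P_bigcap (R : realType) (X : topologicalType) (I : set nat) (F : nat -> set X) :
  P_space R X -> (forall i, I i -> open (F i)) -> open (\bigcap_(i in I) F i).
Proof.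
move=> [_ PX] oF.
have -> : \bigcap_(i in I) F i = \bigcap_i [set z | I i -> F i z].
  apply/seteqP; split=> z /= H i; [move=> _ Ii; exact: H | move=> Ii; exact: (H i Logic.I Ii)].
apply: PX => i; case: (pselect (I i)) => Ii.
  have -> : [set z | I i -> F i z] = F i by apply/seteqP; split=> z /=; [move=> h; exact: h | move=> ? ?].
  exact: oF.
have -> : [set z | I i -> F i z] = setT by apply/seteqP; split=> z //= _ /Ii.
exact: openT.
Qed.

Lemma P_clopen (R : realType) (X : topologicalType) (g : X -> R) :
  P_space R X -> continuous g ->
  open (g @^-1` [set 0]) /\ open (~` (g @^-1` [set 0])).
Proof.
move=> PX cg; split.
  have -> : g @^-1` [set 0] = \bigcap_(k in [set: nat]) g @^-1` (ball (0:R) (k.+1%:R^-1)).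
    apply/seteqP; split => z /=.
      move=> gz k _; rewrite /= gz; exact: ballxx.
    move=> H; apply/eqP; apply/negPn/negP => gz0.
    have gp : 0 < `|g z| by rewrite normr_gt0.
    pose k := Num.bound (`|g z|^-1).
    have := H k I; rewrite /ball /= sub0r normrN.
    have kb : `|g z|^-1 < k%:R by apply: archi_boundP; rewrite invr_ge0 normr_ge0.
    have : k.+1%:R^-1 < `|g z|.
      rewrite -[X in _ < X]invrK ltf_pV2 ?posrE ?invr_gt0 //.
      by apply: (lt_trans kb); rewrite ltr_nat.
    by move=> h1 h2; have := lt_trans h2 h1; rewrite ltxx.
  apply: (@P_bigcap R X setT _ PX) => k _; apply: open_comp; first by move=> ? _; exact: cg.
  exact: ball_open.
rewrite preimage_setC; apply: (@open_comp X R g); first by move=> ? _; exact: cg.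
rewrite openC; apply: accessible_closed_set1; apply: hausdorff_accessible.
exact: Rhausdorff.
Qed.



Lemma disc_cont (X Y : topologicalType) : (forall A : set X, open A) ->
  forall f : X -> Y, continuous f.
Proof. move=> dX f; apply: lc_cont => x; exists [set x]; split; [exact: dX | by [] | by move=> z ->]. Qed.

Lemma bounded_pt (R : realType) (X : topologicalType) (B : set (X -> R)) :
  Cp_bounded R X B -> forall x, exists M, forall f, B f -> `|f x| <= M.
Proof.
move=> [_ HB] x.
have HU : nbhs (0 : {ptws X -> R}) [set g : X -> R | `|g x| < 1].
  have h := @pointwise_cvgP X R (nbhs (0 : {ptws X -> R})) 0.
  have h2 := (h _).1 cvg_id x.
  have := (cvgrPdist_lt _ _).1 (h2 _) _ ltr01.
  have FF : Filter (nbhs (0 : {ptws X -> R})) by apply: nbhs_filter.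
  move=> /(_ FF FF); apply: filterS => g /=.
  by rewrite sub0r normrN.
have [r [r0 Hr]] := HB _ HU.
exists `|r + 1| => f Bf.
have := Hr (r + 1); rewrite gtr0_norm; last by lra.
have rr : r < r + 1 by lra.
move=> /(_ rr) /(_ f Bf) [u [Uu _] <-].
rewrite normrM gtr0_norm; last by lra.
have h1 : `|u x| < 1 := Uu.
have h2 := normr_ge0 (u x).
nra.
Qed.

Lemma cd_res (R : realType) (X : topologicalType) :
  countable [set: X] -> discrete_topology_on X -> has_bounded_resolution R X.
Proof.
move=> /countable_injP [e einj] dX.
have ctsall := @disc_cont X R dX.
exists (fun a => [set f : X -> R | continuous f /\ forall x, `|f x| <= (a (e x))%:R]).
split; [|split].
- move=> a; split; first by move=> f [].
  move=> U HU.
  pose D := fun d : R => [set g : X -> R | exists t u, [/\ `|t| < d,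
     (forall x, `|u x| <= (a (e x))%:R) & g = (fun x => t * u x)]].
  pose G := filter_from [set d : R | 0 < d] D.
  have FG : Filter G.
    apply: filter_from_filter; first by exists (1:R) => /=; exact: ltr01.
    move=> i j i0 j0; exists (Num.min i j); first by rewrite /= lt_min i0 j0.
    move=> g [t [u [tm hu ->]]]; move: tm; rewrite lt_min => /andP[ti tj].
    by split; exists t, u; split.
  have cG : {ptws, G --> (0 : X -> R)}.
    apply/pointwise_cvgP => x; apply/cvgrPdist_lt => eps eps0.
    have a0 : 0 < (a (e x))%:R + 1 :> R by rewrite ltr_wpDl.
    exists (eps / ((a (e x))%:R + 1)); first by rewrite /= divr_gt0.
    move=> g [t [u [tm hu ->]]] /=; rewrite sub0r normrN normrM.
    have h1 : `|t| * `|u x| <= `|t| * ((a (e x))%:R + 1).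
      by apply: ler_wpM2l => //; apply: le_trans (hu x) _; rewrite lerDl.
    apply: le_lt_trans h1 _; rewrite -ltr_pdivlMr //.
  have [d d0 DU] := cG U HU.
  exists d^-1; split; first by rewrite invr_gt0.
  move=> t tlt f [cf hf].
  have t0 : 0 < `|t| by apply: lt_trans tlt; rewrite invr_gt0.
  have tn0 : t != 0 by rewrite -normr_gt0.
  exists (fun x => t^-1 * f x); last first.
    by apply/funext => x; rewrite mulrA mulfV ?mul1r.
  split; last exact: ctsall.
  apply: DU; exists t^-1, f; split => //.
  by rewrite normfV -[d]invrK ltf_pV2 ?posrE ?invr_gt0.
- move=> f cf.
  have : forall n, exists k : nat, forall x, e x = n -> `|f x| <= k%:R.
    move=> n; case: (pselect (exists x, e x = n)) => [[x0 ex0]|nx].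
      exists (Num.bound `|f x0|) => x exn.
      have -> : x = x0 by apply: einj; rewrite ?inE // exn.
      by apply/ltW/archi_boundP.
    by exists 0%N => x exn; exfalso; apply: nx; exists x.
  move/choice => [a ha]; exists a => //; split => // x; exact: ha.
- move=> a b hab f [cf hf]; split => // x; apply: le_trans (hf x) _.
  by rewrite ler_nat; exact: hab.
Qed.



Lemma countable_discrete (R : realType) (X : topologicalType) :
  P_space R X -> countable [set: X] -> discrete_topology_on X.
Proof.
move=> PX /countable_injP [e einj] A.
have o1 : forall x : X, open [set x].
  move=> x.
  have -> : [set x] = \bigcap_(n in [set: nat]) ~` [set z | e z = n /\ z <> x].
    apply/seteqP; split => z /=.
      by move=> -> n _ [_ h]; exact: h.
    by move=> h; apply: contrapT => zx; exact: (h (e z) Logic.I (conj erefl zx)).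
  apply: (@P_bigcap R X setT _ PX) => n _; rewrite openC.
  case: (pselect (exists z, e z = n /\ z <> x)) => [[z0 [ez0 z0x]]|nz].
    have -> : [set z | e z = n /\ z <> x] = [set z0].
      apply/seteqP; split => z /=.
        by move=> [ez zx]; apply: einj; rewrite ?inE // ez ez0.
      by move=> ->; split.
    by apply: accessible_closed_set1; case: PX => [[]].
  have -> : [set z | e z = n /\ z <> x] = set0.
    by apply/seteqP; split => z // hz; apply: nz; exists z.
  exact: closed0.
rewrite openE => x Ax.
have : nbhs x [set x] by apply: open_nbhs_nbhs; split => //; exact: o1.
by apply: filterS => z ->.
Qed.



Lemma res_countable (R : realType) (X : topologicalType) :
  P_space R X -> has_bounded_resolution R X -> countable [set: X].
Proof.
move=> PX [B [Bb [Bcov Bmon]]].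
have acc : accessible_space X by case: PX => [[]].
have creg : completely_regular_space X by case: PX => [[]].
have Bpt := fun a => @bounded_pt R X _ (Bb a).
pose C (s : seq nat) := [set f : X -> R | exists b, mkseq b (size s) = s /\ B b f].
pose A (s : seq nat) := [set x : X | exists M : R, forall f, C s f -> `|f x| <= M].
have key : forall a x, exists k, A (mkseq a k) x.
  move=> a x; apply: contrapT => nk.
  have : forall k, exists p : (nat -> nat) * (X -> R),
      [/\ mkseq p.1 k = mkseq a k, B p.1 p.2 & k%:R < `|p.2 x|].
    move=> k.
    have nAk : ~ A (mkseq a k) x by move=> h; apply: nk; exists k.
    have : ~ (forall f, C (mkseq a k) f -> `|f x| <= k%:R).
      by move=> h; apply: nAk; exists k%:R.
    move/existsNP => [f /not_implyP [[b [hb Bbf]] nle]].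
    exists (b, f); rewrite size_mkseq in hb; split => //=.
    by rewrite ltNge; apply/negP.
  move/choice => [p hp].
  pose g n := maxn (a n) (\max_(k < n.+1) (p k).1 n).
  have pg : forall k, le_NN (p k).1 g.
    move=> k n; rewrite /g; case: (ltnP n k) => nlk.
      have [h _ _] := hp k.
      have : nth 0%N (mkseq (p k).1 k) n = nth 0%N (mkseq a k) n by rewrite h.
      by rewrite !nth_mkseq // => ->; exact: leq_maxl.
    apply: leq_trans (leq_maxr _ _).
    exact: (@leq_bigmax _ (fun k : 'I_n.+1 => (p k).1 n) (Ordinal (nlk : (k < n.+1)%N))).
  have [M hM] := Bpt g x.
  have [h1 h2 h3] := hp (Num.bound `|M|).
  have := hM _ (Bmon _ _ (pg _) _ h2).
  have := archi_boundP (normr_ge0 M).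
  have := ler_norm M.
  move: h3; set q := (Num.bound `|M|)%:R; lra.
apply: contrapT => ncX.
have inf : forall a, exists k, ~ finite_set (A (mkseq a k)).
  move=> a; apply: contrapT => /forallNP h; apply: ncX.
  have -> : [set: X] = \bigcup_(k in [set: nat]) A (mkseq a k).
    by apply/seteqP; split => x // _; have [k hk] := key a x; exists k.
  apply: bigcup_countable; first exact: countableP.
  by move=> k _; apply: finite_set_countable; apply: contrapT; exact: h.
have [x0 _] : exists x0 : X, True.
  apply: contrapT => nX; apply: ncX.
  have -> : [set: X] = set0.
    by apply/seteqP; split => x // _; apply: nX; exists x.
  exact: countable0.
pose As (n : nat) : set X := if unpickle n is Some s then A s else set0.
pose good n := ~ finite_set (As n).
have : forall nl : nat * seq X, exists y, good nl.1 -> As nl.1 y /\ y \notin nl.2.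
  move=> [n l]; case: (pselect (good n)) => gn; last by exists x0.
  have := infinite_setD gn (finite_seq l).
  case: (pselect (exists y, (As n `\` [set` l]) y)) => [[y [Ay ny]]|ne].
    by move=> _; exists y => _; split => //; apply/negP.
  move=> hinf; exfalso; apply: hinf.
  have -> : As n `\` [set` l] = set0.
    by apply/seteqP; split => y // hy; apply: ne; exists y.
  exact: finite_set0.
move/choice => [pk0 hpk0].
pose pk n l := pk0 (n, l).
have hpk : forall n l, good n -> As n (pk n l) /\ pk n l \notin l.
  by move=> n l; exact: (hpk0 (n, l)).
pose ys := fix ys (n : nat) : seq X := if n is m.+1 then rcons (ys m) (pk m (ys m)) else [::].
pose y n := pk n (ys n).
have yin : forall m n, (m < n)%N -> y m \in ys n.
  move=> m; elim=> // n IH; rewrite ltnS leq_eqVlt => /orP [/eqP ->|/IH h].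
    by rewrite /= mem_rcons in_cons eqxx.
  by rewrite /= mem_rcons in_cons h orbT.
have ydist : forall m n, good m -> good n -> m != n -> y m != y n.
  have H : forall m n, good n -> (m < n)%N -> y m != y n.
    move=> m n gn mn; apply/eqP => e.
    by have := (hpk n (ys n) gn).2; rewrite -/(y n) -e (yin _ _ mn).
  move=> m n gm gn; rewrite neq_ltn => /orP [mn|nm]; first exact: H.
  by rewrite eq_sym; exact: H.
have : forall n, exists M : R, forall s, unpickle n = Some s -> good n ->
    forall f, C s f -> `|f (y n)| <= M.
  move=> n; case hn: (unpickle n) => [s|]; last by exists 0.
  case: (pselect (good n)) => gn; last by exists 0.
  have := (hpk n (ys n) gn).1; rewrite /As hn => -[M hM].
  by exists M => s' [<-] _; exact: hM.
move/choice => [c hc].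
have : forall n, exists W : set X, [/\ open W, open (~` W), good n -> W (y n)
    & forall m, m != n -> good m -> ~ W (y m)].
  move=> n; case: (pselect (good n)) => gn; last first.
    exists set0; split; [exact: open0 | rewrite setC0; exact: openT | by [] | by move=> ? ? ? []].
  pose Bn := [set z | exists m, [/\ m != n, good m & z = y m]].
  have cB : closed Bn.
    rewrite -openC.
    have -> : ~` Bn = \bigcap_(m in [set: nat]) ~` [set z | z = y m /\ (m != n /\ good m)].
      apply/seteqP; split => z /=.
        by move=> h m _ [zm [mn gm]]; apply: h; exists m; split.
      by move=> h [m [mn gm zm]]; exact: (h m Logic.I (conj zm (conj mn gm))).
    apply: (@P_bigcap R X setT _ PX) => m _; rewrite openC.
    case: (pselect (m != n /\ good m)) => hm.
      have -> : [set z | z = y m /\ (m != n /\ good m)] = [set y m].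
        by apply/seteqP; split => z /=; [case | move=> ->; split].
      exact: accessible_closed_set1.
    have -> : [set z | z = y m /\ (m != n /\ good m)] = set0.
      by apply/seteqP; split => z // [].
    exact: closed0.
  have nB : ~ Bn (y n).
    by move=> [m [mn gm e]]; move: (ydist m n gm gn mn); rewrite e eqxx.
  have [g [cg _ g0 g1]] := (@uniform_separatorP X R [set y n] Bn).1 (creg (y n) Bn cB nB).
  have [oW oWc] := @P_clopen R X g PX cg.
  exists (g @^-1` [set 0]); split => //.
    by move=> _; apply: g0; exists (y n).
  move=> m mn gm /= h.
  have : g (y m) = 1 by apply: g1; exists (y m) => //; exists m; split.
  by rewrite h => /eqP; rewrite eq_sym oner_eq0.
move/choice => [W hW].
pose V n := W n `&` \bigcap_(m in [set m | (m < n)%N]) ~` W m.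
have oV : forall n, open (V n).
  move=> n; apply: openI; first by case: (hW n).
  by apply: (@P_bigcap R X _ _ PX) => m _; case: (hW m).
have oVc : forall n, open (~` V n).
  move=> n; rewrite /V setCI setC_bigcap; apply: openU; first by case: (hW n).
  by apply: bigcup_open => m _; rewrite setCK; case: (hW m).
have Vdisj : forall n m z, V n z -> V m z -> n = m.
  move=> n m z [Wn hn] [Wm hm]; case: (ltngtP n m) => // h; exfalso.
    exact: (hm n h Wn).
  exact: (hn m h Wm).
have Vy : forall n, good n -> V n (y n).
  move=> n gn; have [_ _ h _] := hW n; split; first exact: h.
  move=> m /= mn; have [_ _ _ h'] := hW m; apply: h' => //.
  by rewrite neq_ltn mn orbT.
pose f : X -> R := fun x => `|c (xget 0%N [set n | V n x])| + 1.
have cf : continuous f.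
  apply: lc_cont => x; case: (pselect (exists n, V n x)) => [[n Vnx]|nV].
    exists (V n); split => // z Vnz.
    rewrite /f (xget_unique 0%N Vnz (fun m Vm => Vdisj _ _ _ Vm Vnz)).
    by rewrite (xget_unique 0%N Vnx (fun m Vm => Vdisj _ _ _ Vm Vnx)).
  exists (\bigcap_(n in [set: nat]) ~` V n); split.
  - exact: (@P_bigcap R X _ _ PX (fun n _ => oVc n)).
  - by move=> n _ Vnx; apply: nV; exists n.
  - move=> z hz; rewrite /f !xgetPN //.
      by move=> n Vnx; apply: nV; exists n.
    by move=> n Vnz; exact: (hz n Logic.I Vnz).
have [a _ Baf] := Bcov f cf.
have [k nk] := inf a.
pose n := pickle (mkseq a k).
have hn : unpickle n = Some (mkseq a k) by rewrite /n pickleK.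
have gn : good n by rewrite /good /As hn.
have Cf : C (mkseq a k) f by exists a; rewrite size_mkseq.
have := hc n (mkseq a k) hn gn f Cf.
rewrite /f (xget_unique 0%N (Vy n gn) (fun m Vm => Vdisj _ _ _ Vm (Vy n gn))).
have h1 := normr_ge0 (c n); have h2 := ler_norm (c n).
rewrite ger0_norm; last by lra.
lra.
Qed.


Theorem proposition3p4 (R : realType) (X : topologicalType) :
  lindelof_space X -> P_space R X ->
  (has_bounded_resolution R X <->
   (countable [set: X] /\ discrete_topology_on X)).
Proof.
move=> _ PX; split.
  move=> hr; have cX := @res_countable R X PX hr.
  by split => //; exact: (@countable_discrete R X PX cX).
by move=> [cX dX]; exact: cd_res.
Qed.
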